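(* Let $(X,\|\cdot,\cdot\|)$ be a $2$-normed space, $E\subseteq X$, and $f:E\to X$. If $f$ is statistically sequentially continuous on $E$, then $f$ is sequentially continuous on $E$.
   Context: A $2$-normed space is a real linear space $X$ with $\dim X>1$ together with a function $\|\cdot,\cdot\|:X^2\to\mathbb{R}$ such that for all $x,y,z\in X$, $\alpha\in\mathbb{R}$: (1) $\|x,y\|=0$ iff $x,y$ are linearly dependent; (2) $\|x,y\|=\|y,x\|$; (3) $\|\alpha x,y\|=|\alpha|\|x,y\|$; (4) $\|x,y+z\|\le\|x,y\|+\|x,z\|$. A sequence $(x_n)$ in $X$ converges to $x\in X$ if $\lim_{n\to\infty}\|x_n-x,z\|=0$ for every $z\in X$. For $M\subseteq\mathbb{N}$, its asymptotic density is $\delta(M)=\lim_{n\to\infty}\frac1n|\{k\le n:k\in M\}|$ when the limit exists. A sequence $(x_k)$ in $X$ statistically converges to $L\in X$ if for every $\epsilon>0$ and every $z\in X$, $\lim_{n\to\infty}\frac1n|\{k\le n:\|x_k-L,z\|\ge\epsilon\}|=0$. A function $f:E\to X$ is sequentially continuous on $E$ if for every $x_0\in E$ and every sequence $(x_n)$ in $E$ converging to $x_0$, $(f(x_n))$ converges to $f(x_0)$. It is statistically sequentially continuous on $E$ if for every $x_0\in E$ and every sequence $(x_n)$ in $E$ statistically converging to $x_0$, $(f(x_n))$ statistically converges to $f(x_0)$. *)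

(* Defs.v *)
From Stdlib Require Import Reals Lra Lia ClassicalEpsilon.
Open Scope R_scope.

Record TwoNormedSpace := {
  carrier :> Type;
  vzero : carrier;
  vadd : carrier -> carrier -> carrier;
  vopp : carrier -> carrier;
  vscal : R -> carrier -> carrier;
  vadd_assoc : forall x y z, vadd x (vadd y z) = vadd (vadd x y) z;
  vadd_comm : forall x y, vadd x y = vadd y x;
  vadd_zero : forall x, vadd x vzero = x;
  vadd_opp : forall x, vadd x (vopp x) = vzero;
  vscal_one : forall x, vscal 1 x = x;
  vscal_assoc : forall a b x, vscal a (vscal b x) = vscal (a * b) x;
  vscal_distr_v : forall a x y, vscal a (vadd x y) = vadd (vscal a x) (vscal a y);
  vscal_distr_s : forall a b x, vscal (a + b) x = vadd (vscal a x) (vscal b x);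
  dim_gt1 : exists x y : carrier,
      forall a b : R, vadd (vscal a x) (vscal b y) = vzero -> a = 0 /\ b = 0;
  norm2 : carrier -> carrier -> R;
  norm2_zero : forall x y, norm2 x y = 0 <->
      exists a b : R, (a <> 0 \/ b <> 0) /\ vadd (vscal a x) (vscal b y) = vzero;
  norm2_sym : forall x y, norm2 x y = norm2 y x;
  norm2_scal : forall (a : R) x y, norm2 (vscal a x) y = Rabs a * norm2 x y;
  norm2_triangle : forall x y z, norm2 x (vadd y z) <= norm2 x y + norm2 x z
}.

Definition vsub (X : TwoNormedSpace) (x y : X) : X := vadd X x (vopp X y).

Definition converges (X : TwoNormedSpace) (xs : nat -> X) (x : X) : Prop :=
  forall z : X, Un_cv (fun n => norm2 X (vsub X (xs n) x) z) 0.

(* |{k <= n : P k}| with k ranging over 1..n. *)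
Fixpoint count_upto (P : nat -> Prop) (n : nat) : nat :=
  match n with
  | O => O
  | S m => count_upto P m +
           (if excluded_middle_informative (P (S m)) then 1 else 0)%nat
  end.

Definition stat_converges (X : TwoNormedSpace) (xs : nat -> X) (L : X) : Prop :=
  forall (eps : R) (z : X), eps > 0 ->
    Un_cv (fun n => INR (count_upto (fun k => norm2 X (vsub X (xs k) L) z >= eps) n)
                    / INR n) 0.

(* E is a subset of X given as a predicate; f : E -> X is represented by a
   function X -> X whose values off E are irrelevant. *)
Definition seq_continuous_on (X : TwoNormedSpace) (E : X -> Prop) (f : X -> X) : Prop :=
  forall (x0 : X) (xs : nat -> X), E x0 -> (forall n, E (xs n)) ->
    converges X xs x0 -> converges X (fun n => f (xs n)) (f x0).

Definition stat_seq_continuous_on (X : TwoNormedSpace) (E : X -> Prop) (f : X -> X) : Prop :=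
  forall (x0 : X) (xs : nat -> X), E x0 -> (forall n, E (xs n)) ->
    stat_converges X xs x0 -> stat_converges X (fun n => f (xs n)) (f x0).

(* Main.v *)
Require Import Defs.
From Stdlib Require Import Reals.
From Stdlib Require Import Lra Lia Classical ClassicalEpsilon.
Open Scope R_scope.

Lemma vscal0 (X : TwoNormedSpace) (x : X) : vscal X 0 x = vzero X.
Proof.
  assert (H : vscal X 0 x = vadd X (vscal X 0 x) (vscal X 0 x)).
  { rewrite <- vscal_distr_s. f_equal. lra. }
  assert (H2 : vadd X (vscal X 0 x) (vopp X (vscal X 0 x)) = vzero X) by apply vadd_opp.
  rewrite H in H2 at 1. rewrite <- vadd_assoc, vadd_opp, vadd_zero in H2. exact H2.
Qed.

Lemma vopp_scal (X : TwoNormedSpace) (y : X) : vopp X y = vscal X (-1) y.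
Proof.
  assert (Hs : vadd X y (vscal X (-1) y) = vzero X).
  { rewrite <- (vscal_one X y) at 1. rewrite <- vscal_distr_s.
    replace (1 + -1) with 0 by lra. apply vscal0. }
  rewrite <- (vadd_zero X (vopp X y)). rewrite <- Hs.
  rewrite vadd_assoc. rewrite (vadd_comm X (vopp X y) y), vadd_opp.
  rewrite vadd_comm, vadd_zero. reflexivity.
Qed.

Lemma norm2_nonneg (X : TwoNormedSpace) (x y : X) : 0 <= norm2 X x y.
Proof.
  assert (H0 : norm2 X x (vzero X) = 0).
  { apply norm2_zero. exists 0, 1. split; [right; lra|].
    rewrite vscal0, vscal_one, vadd_zero. reflexivity. }
  assert (H1 := norm2_triangle X x y (vopp X y)).
  rewrite vadd_opp, H0 in H1.
  rewrite vopp_scal, (norm2_sym X x (vscal X (-1) y)), norm2_scal, (norm2_sym X y x) in H1.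
  replace (Rabs (-1)) with 1 in H1 by (rewrite Rabs_left; lra). lra.
Qed.

Lemma count_le_n (P : nat -> Prop) n : (count_upto P n <= n)%nat.
Proof.
  induction n; simpl; auto.
  destruct (excluded_middle_informative (P (S n))); lia.
Qed.

Lemma count_le_N (P : nat -> Prop) N :
  (forall k, (k > N)%nat -> ~ P k) -> forall n, (count_upto P n <= N)%nat.
Proof.
  intros H n; induction n; simpl; [lia|].
  destruct (excluded_middle_informative (P (S n))) as [p|p].
  - destruct (Compare_dec.le_lt_dec (S n) N).
    + pose proof (count_le_n P n). lia.
    + exfalso; apply (H (S n)); auto.
  - lia.
Qed.

Lemma count_all (P : nat -> Prop) : (forall k, P k) -> forall n, count_upto P n = n.
Proof.
  intros H n; induction n; simpl; auto.
  destruct (excluded_middle_informative (P (S n))) as [p|p]; [lia| exfalso; auto].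
Qed.

Lemma bounded_ratio_cv (c : nat -> nat) N :
  (forall n, (c n <= N)%nat) -> Un_cv (fun n => INR (c n) / INR n) 0.
Proof.
  intros H e he.
  destruct (archimed (INR N / e)) as [Ha _].
  destruct (INR_unbounded (Rmax 0 (IZR (up (INR N / e))))) as [M HM].
  exists (S M). intros n hn. unfold R_dist.
  assert (hn' : INR n >= INR (S M)) by (apply Rle_ge, le_INR; lia).
  rewrite S_INR in hn'.
  assert (Hp : 0 < INR n) by (pose proof (pos_INR M); lra).
  assert (Hc : INR (c n) <= INR N) by (apply le_INR; auto).
  assert (Hc0 := pos_INR (c n)).
  assert (HNe : INR N / e < INR n).
  { pose proof (Rmax_r 0 (IZR (up (INR N / e)))). lra. }
  rewrite Rminus_0_r, Rabs_right.
  - apply Rmult_lt_reg_r with (INR n); auto.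
    unfold Rdiv. rewrite Rmult_assoc, Rinv_l by lra.
    apply Rmult_lt_compat_r with (r := e) in HNe; auto.
    unfold Rdiv in HNe. rewrite Rmult_assoc, Rinv_l in HNe by lra. lra.
  - apply Rle_ge. unfold Rdiv. apply Rmult_le_pos; auto.
    left; apply Rinv_0_lt_compat; auto.
Qed.

Lemma conv_stat (X : TwoNormedSpace) (xs : nat -> X) (x : X) :
  converges X xs x -> stat_converges X xs x.
Proof.
  intros H eps z he.
  destruct (H z eps he) as [N HN].
  apply bounded_ratio_cv with N.
  apply count_le_N. intros k hk hP.
  specialize (HN k ltac:(lia)). unfold R_dist in HN.
  rewrite Rminus_0_r in HN. pose proof (Rle_abs (norm2 X (vsub X (xs k) x) z)). lra.
Qed.

Theorem theorem3p1 (X : TwoNormedSpace) (E : X -> Prop) (f : X -> X) :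
  stat_seq_continuous_on X E f -> seq_continuous_on X E f.
Proof.
  intros Hs x0 xs HE HEs Hc z.
  set (d := fun n => norm2 X (vsub X (f (xs n)) (f x0)) z).
  destruct (classic (exists e, e > 0 /\ forall N, exists n, (n >= N)%nat /\ d n >= e))
    as [[e [he HN]] | Hn].
  - set (g := fun N => proj1_sig (constructive_indefinite_description _ (HN N))).
    assert (Hg : forall N, (g N >= N)%nat /\ d (g N) >= e).
    { intro N. unfold g. destruct (constructive_indefinite_description _ (HN N)); auto. }
    assert (Hy : converges X (fun k => xs (g k)) x0).
    { intros z' e' he'. destruct (Hc z' e' he') as [N HN'].
      exists N. intros n hn. apply HN'. destruct (Hg n). lia. }
    pose proof (Hs x0 (fun k => xs (g k)) HE (fun n => HEs (g n)) (conv_stat X _ _ Hy) e z he) as Hst.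
    simpl in Hst.
    destruct (Hst (1/2) ltac:(lra)) as [N HN2].
    specialize (HN2 (S N) ltac:(lia)).
    rewrite (count_all (fun k => norm2 X (vsub X (f (xs (g k))) (f x0)) z >= e) (fun k => proj2 (Hg k))) in HN2.
 unfold R_dist in HN2.
    rewrite Rminus_0_r in HN2. unfold Rdiv in HN2.
    rewrite Rinv_r in HN2 by (apply not_0_INR; lia).
    rewrite Rabs_R1 in HN2. lra.
  - intros e he. apply NNPP. intro H1. apply Hn. exists e. split; auto.
    intro N. apply NNPP. intro H2. apply H1. exists N. intros n hn.
    unfold R_dist. rewrite Rminus_0_r.
    assert (d n < e).
    { apply Rnot_ge_lt. intro. apply H2. exists n; auto. }
    rewrite Rabs_right; [exact H| apply Rle_ge, norm2_nonneg].
Qed.
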